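(* Let $\mathcal{S}$ be a temporal feedback graph on $T$ rounds with maximal orders $C_1,\dots,C_N$, and let $\boldsymbol\mu^*$ be any optimal solution to the upper bound dual program. Let $\mathcal{C}(\boldsymbol\mu^* )\subseteq[N]$ be the set of $c$ with $\sum_{t\in C_c}(\mu^*_t)^2=1$. Then there exists a subset $\mathcal{B}\subseteq\mathcal{C}(\boldsymbol\mu^* )$ with $|\mathcal{B}|\le T$ and an optimal solution $\boldsymbol\lambda^*$ of the upper bound program such that $\lambda^*_{c,t}=0$ for all $t$ whenever $c\notin\mathcal{B}$.
   Context: A temporal feedback graph $\mathcal{S}$ is a collection of subsets $S_t\subseteq[T]\setminus\{t\}$. An order is a sequence $t_1,\dots,t_w$ with $t_u\in S_{t_v}$ for all $u<v$; maximal if no super-sequence is an order. Upper bound program: minimize $\sum_{c=1}^N\sqrt{\sum_{t\in C_c}\lambda_{c,t}^2}$ subject to $\sum_{c}\lambda_{c,t}=1$ for all $t\in[T]$, $\lambda_{c,t}=0$ if $t\notin C_c$, $\lambda_{c,t}\ge0$. Upper bound dual program: maximize $\sum_{t=1}^T\mu_t$ subject to $\sum_{t\in C_c}\mu_t^2\le1$ for all $c\in[N]$, $\mu_t\ge0$. *)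

(* Defs.v *)
From HB Require Import structures.
From mathcomp Require Import all_boot all_order all_algebra.
From mathcomp Require Import reals.
Set Implicit Arguments. Unset Strict Implicit. Unset Printing Implicit Defensive.
Import Order.TTheory GRing.Theory Num.Theory.
Local Open Scope ring_scope.

Definition temporal_feedback_graph (T : nat) (S : 'I_T -> {set 'I_T}) : Prop :=
  forall t, t \notin S t.

(* An order t_1,...,t_w: t_u ∈ S_{t_v} for all u < v.
   (x0 is only a default for nth; indices are always in range.) *)
Definition is_order (T : nat) (S : 'I_T -> {set 'I_T}) (s : seq 'I_T) : Prop :=
  forall (x0 : 'I_T) (u v : nat), (u < v)%N -> (v < size s)%N ->
    nth x0 s u \in S (nth x0 s v).

Definition is_maximal_order (T : nat) (S : 'I_T -> {set 'I_T}) (s : seq 'I_T) : Prop :=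
  is_order S s /\ forall s', subseq s s' -> is_order S s' -> s' = s.

Definition enumerates_maximal_orders (T N : nat) (S : 'I_T -> {set 'I_T})
    (C : 'I_N -> seq 'I_T) : Prop :=
  injective C /\ forall s, is_maximal_order S s <-> exists c, C c = s.

Definition ub_objective (R : realType) (T N : nat) (C : 'I_N -> seq 'I_T)
    (lam : 'I_N -> 'I_T -> R) : R :=
  \sum_(c < N) Num.sqrt (\sum_(t < T | t \in C c) lam c t ^+ 2).

Definition ub_feasible (R : realType) (T N : nat) (C : 'I_N -> seq 'I_T)
    (lam : 'I_N -> 'I_T -> R) : Prop :=
  (forall t, \sum_(c < N) lam c t = 1) /\
  (forall c t, t \notin C c -> lam c t = 0) /\
  (forall c t, 0 <= lam c t).

Definition ub_optimal (R : realType) (T N : nat) (C : 'I_N -> seq 'I_T)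
    (lam : 'I_N -> 'I_T -> R) : Prop :=
  ub_feasible C lam /\
  forall lam', ub_feasible C lam' -> ub_objective C lam <= ub_objective C lam'.

Definition dual_objective (R : realType) (T : nat) (mu : 'I_T -> R) : R :=
  \sum_(t < T) mu t.

Definition dual_feasible (R : realType) (T N : nat) (C : 'I_N -> seq 'I_T)
    (mu : 'I_T -> R) : Prop :=
  (forall c, \sum_(t < T | t \in C c) mu t ^+ 2 <= 1) /\ (forall t, 0 <= mu t).

Definition dual_optimal (R : realType) (T N : nat) (C : 'I_N -> seq 'I_T)
    (mu : 'I_T -> R) : Prop :=
  dual_feasible C mu /\
  forall mu', dual_feasible C mu' -> dual_objective mu' <= dual_objective mu.

Definition tight_set (R : realType) (T N : nat) (C : 'I_N -> seq 'I_T)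
    (mu : 'I_T -> R) : {set 'I_N} :=
  [set c | \sum_(t < T | t \in C c) mu t ^+ 2 == 1].

(* Main.v *)
Require Import Defs.
From mathcomp Require Import all_boot all_order all_algebra.
From mathcomp Require Import reals.
From mathcomp Require Import ring lra.
From Stdlib Require Import Classical.
Set Implicit Arguments. Unset Strict Implicit. Unset Printing Implicit Defensive.
Import Order.TTheory GRing.Theory Num.Theory.
Local Open Scope ring_scope.

Section Aux.
Variable R : realType.

Lemma ex_argmin (I : finType) (P : pred I) (f : I -> R) i0 : P i0 ->
  exists i, P i /\ forall j, P j -> f i <= f j.
Proof.
move=> Pi0; case: (arg_minP f Pi0) => i Pi Hi; by exists i.
Qed.

Definition dot T (f g : 'I_T -> R) := \sum_t f t * g t.

Lemma dotBr T (f g h : 'I_T -> R) k :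
  dot f (fun t => g t - k * h t) = dot f g - k * dot f h.
Proof.
rewrite /dot mulr_sumr -sumrB; apply: eq_bigr => t _; ring.
Qed.

Lemma dotBl T (f g h : 'I_T -> R) k :
  dot (fun t => g t - k * h t) f = dot g f - k * dot h f.
Proof.
rewrite /dot mulr_sumr -sumrB; apply: eq_bigr => t _; ring.
Qed.

Lemma farkas T m (a : 'I_m -> 'I_T -> R) (b : 'I_T -> R) :
  (forall x, (forall i, dot (a i) x <= 0) -> dot b x <= 0) ->
  exists l : 'I_m -> R, (forall i, 0 <= l i) /\
    forall t, b t = \sum_(i < m) l i * a i t.
Proof.
elim: m a b => [|m IH] a b H.
  exists (fun _ => 0); split=> // t; rewrite big_ord0.
  have Hb : dot b b <= 0 by apply: H => -[].
  have h0 : dot b b = 0.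
    by apply/le_anti; rewrite Hb /dot sumr_ge0 // => i _; rewrite -expr2 sqr_ge0.
  have /eqP : b t * b t = 0.
    by apply: (psumr_eq0P _ h0) => // i _; rewrite -expr2 sqr_ge0.
  by rewrite mulf_eq0 orbb => /eqP.
pose a0 := a ord0.
case: (classic (forall x, (forall j : 'I_m, dot (a (lift ord0 j)) x <= 0) -> dot b x <= 0)) => [H1 | H1].
  have [l [l0 Hl]] := IH (fun j => a (lift ord0 j)) b H1.
  exists (fun i => if unlift ord0 i is Some j then l j else 0); split.
    by move=> i; case: (unliftP ord0 i) => [j|] _.
  move=> t; rewrite big_ord_recl unlift_none mul0r add0r Hl.
  by apply: eq_bigr => j _; rewrite liftK.
have [xb Hxx] := not_all_ex_not _ _ H1.
have [Hxa Hxb] := imply_to_and _ _ Hxx.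
have bpos : 0 < dot b xb by rewrite ltNge; apply/negP.
pose q := dot a0 xb.
have qpos : 0 < q.
  rewrite ltNge; apply/negP => hq; apply: Hxb; apply: H => i.
  by case: (unliftP ord0 i) => [j|] ->.
have q0 : q != 0 by rewrite gt_eqF.
pose a' := fun j t => a (lift ord0 j) t - dot (a (lift ord0 j)) xb / q * a0 t.
pose b' := fun t => b t - dot b xb / q * a0 t.
have H' : forall x, (forall j, dot (a' j) x <= 0) -> dot b' x <= 0.
  move=> x Hx; pose y := fun t => x t - dot a0 x / q * xb t.
  have Hy : dot b y <= 0.
    apply: H => i; case: (unliftP ord0 i) => [j|] ->.
      have := Hx j; rewrite /a' /y dotBl dotBr.
      suff -> : dot a0 x / q * dot (a (lift ord0 j)) xb =
                dot (a (lift ord0 j)) xb / q * dot a0 x by [].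
      by ring.
    by rewrite /y dotBr -/a0 -/q divfK // subrr.
  move: Hy; rewrite /b' /y dotBl dotBr.
  suff -> : dot a0 x / q * dot b xb = dot b xb / q * dot a0 x by [].
  by ring.
have [l [l0 Hl]] := IH a' b' H'.
pose k := (dot b xb - \sum_j l j * dot (a (lift ord0 j)) xb) / q.
exists (fun i => if unlift ord0 i is Some j then l j else k); split.
  move=> i; case: (unliftP ord0 i) => [j|] _ //.
  rewrite /k divr_ge0 ?(ltW qpos) // subr_ge0; apply: le_trans (ltW bpos).
  by apply: sumr_le0 => j _; rewrite mulr_ge0_le0.
move=> t; rewrite big_ord_recl unlift_none.
under eq_bigr => j _ do rewrite liftK.
have E : \sum_j l j * a' j t = \sum_j l j * a (lift ord0 j) t -
   (\sum_j l j * dot (a (lift ord0 j)) xb) / q * a0 t.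
  by rewrite !mulr_suml -sumrB; apply: eq_bigr => j _; rewrite /a'; ring.
move: (Hl t); rewrite E /b' => h.
have -> : b t = (b t - dot b xb / q * a0 t) + dot b xb / q * a0 t by ring.
by rewrite h /k /a0; ring.
Qed.

Lemma dep T m (a : 'I_m -> 'I_T -> R) (A : {set 'I_m}) : (T < #|A|)%N ->
  exists w : 'I_m -> R, [/\ exists i, w i != 0, forall i, i \notin A -> w i = 0 &
     forall t, \sum_i w i * a i t = 0].
Proof.
move=> hA.
have [x0 x0A] : exists x0, x0 \in A by apply/card_gt0P; apply: leq_ltn_trans hA.
pose M : 'M[R]_(#|A|, T) := \matrix_(j, t) a (enum_val j) t.
have rk : (0 < \rank (kermx M))%N.
  by rewrite mxrank_ker subn_gt0 (leq_ltn_trans (rank_leq_col M) hA).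
have [j0 hj0] : exists j, row j (kermx M) != 0.
  case: (pickP (fun j => row j (kermx M) != 0)) => [j hj|hn]; first by exists j.
  exfalso; have K0 : kermx M = 0.
    by apply/row_matrixP => j; rewrite row0; move: (hn j) => /negbFE/eqP.
  by move: rk; rewrite K0 mxrank0.
pose u := row j0 (kermx M).
have uM : u *m M = 0 by rewrite /u -row_mul mulmx_ker row0.
have [j1 hj1] : exists j, u 0 j != 0.
  case: (pickP (fun j => u 0 j != 0)) => [j hj|hn]; first by exists j.
  exfalso; move/eqP: hj0; apply; apply/matrixP => i j.
  by rewrite (ord1 i) [RHS]mxE; move: (hn j) => /negbFE/eqP.
exists (fun i => if i \in A then u 0 (enum_rank_in x0A i) else 0); split.
- by exists (enum_val j1); rewrite enum_valP enum_valK_in.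
- by move=> i /negbTE ->.
- move=> t; rewrite (bigID (mem A)) /= [X in _ + X]big1 ?addr0; last first.
    by move=> i /negbTE ->; rewrite mul0r.
  under eq_bigr => i hi do rewrite hi.
  rewrite big_enum_val /=.
  transitivity ((u *m M) 0 t); last by rewrite uM mxE.
  by rewrite mxE; apply: eq_bigr => j _; rewrite (enum_valK_in x0A) /M !mxE.
Qed.

Lemma carath T m (a : 'I_m -> 'I_T -> R) (b : 'I_T -> R) (l : 'I_m -> R) :
 (forall i, 0 <= l i) -> (forall t, b t = \sum_i l i * a i t) ->
 exists l' : 'I_m -> R, [/\ forall i, 0 <= l' i, forall t, b t = \sum_i l' i * a i t &
   (#|[set i | l' i != 0%R]| <= T)%N].
Proof.
move: l.
suff: forall n (l : 'I_m -> R), #|[set i | l i != 0]| = n -> (forall i, 0 <= l i) ->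
  (forall t, b t = \sum_i l i * a i t) ->
  exists l' : 'I_m -> R, [/\ forall i, 0 <= l' i, forall t, b t = \sum_i l' i * a i t &
   (#|[set i | l' i != 0%R]| <= T)%N].
  by move=> H l; exact: H _ l erefl.
elim/ltn_ind => n IHn l hn l0 hb.
case: (leqP n T) => hT; first by exists l; rewrite hn.
have hA : (T < #|[set i | l i != 0%R]|)%N by rewrite hn.
have [w [[i1 hi1] wA wsum]] := dep a hA.
have [w' [[i2 hi2] w'A w'sum]] : exists w' : 'I_m -> R, [/\ exists i, 0 < w' i,
    forall i, l i = 0 -> w' i = 0 & forall t, \sum_i w' i * a i t = 0].
  case: (ltgtP (w i1) 0) => hw; last by rewrite hw eqxx in hi1.
  - exists (fun i => - w i); split.
    + by exists i1; rewrite oppr_gt0.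
    + by move=> i li; rewrite wA ?oppr0 // inE li eqxx.
    + by move=> t; under eq_bigr do rewrite mulNr; rewrite sumrN wsum oppr0.
  - exists w; split => //; first by exists i1.
    by move=> i li; rewrite wA // inE li eqxx.
have [i0 [pi0 Hmin]] := ex_argmin (fun i => l i / w' i) (P := fun i => 0 < w' i) hi2.
pose th := l i0 / w' i0.
have th0 : 0 <= th by rewrite divr_ge0 // ltW.
pose l' := fun i => l i - th * w' i.
have l'0 : forall i, 0 <= l' i.
  move=> i; rewrite /l' subr_ge0; case: (ltP 0 (w' i)) => wi.
    by have := Hmin i wi; rewrite ler_pdivlMr // mulrC.
  by apply: le_trans (l0 i); rewrite mulr_ge0_le0.
have supp : [set i | l' i != 0] \proper [set i | l i != 0].
  apply/properP; split.
    apply/subsetP => i; rewrite !inE; apply: contra => /eqP li.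
    by rewrite /l' li (w'A _ li) mulr0 subrr.
  exists i0.
    by rewrite inE; apply/eqP => h; rewrite (w'A _ h) ltxx in pi0.
  by rewrite inE negbK /l' /th divfK ?subrr // gt_eqF.
apply: (IHn _ _ l' erefl l'0); first by rewrite -hn; exact: proper_card.
move=> t; rewrite /l'; under eq_bigr do rewrite mulrBl; rewrite sumrB -hb.
have -> : \sum_i th * w' i * a i t = th * \sum_i w' i * a i t.
  by rewrite mulr_sumr; apply: eq_bigr => *; rewrite mulrA.
by rewrite w'sum mulr0 subr0.
Qed.

End Aux.
Section P.
Variable R : realType.

Lemma sub_sum_le T (P : pred 'I_T) (f : 'I_T -> R) :
  (forall t, 0 <= f t) -> \sum_(t | P t) f t <= \sum_t f t.
Proof. by move=> f0; rewrite [X in _ <= X](bigID P) /= lerDl sumr_ge0. Qed.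

Lemma expand T (P : pred 'I_T) (mu d : 'I_T -> R) x e :
  \sum_(t | P t) (x * mu t + e * d t) ^+ 2 =
  x ^+ 2 * \sum_(t | P t) mu t ^+ 2 + 2 * x * e * \sum_(t | P t) mu t * d t
  + e ^+ 2 * \sum_(t | P t) d t ^+ 2.
Proof. by rewrite !mulr_sumr -!big_split; apply: eq_bigr => t _ /=; ring. Qed.

Lemma perturb T N (C : 'I_N -> seq 'I_T) (mu d : 'I_T -> R) :
  dual_optimal C mu ->
  (forall c, c \in tight_set C mu -> \sum_(t < T | t \in C c) mu t * d t <= 0) ->
  \sum_t d t <= 0.
Proof.
move=> [[feas mu0] opt] Hd.
rewrite leNgt; apply/negP => dpos.
pose D := \sum_t d t ^+ 2.
pose P := \sum_t `|mu t * d t|.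
pose Sm := \sum_t mu t.
have D0 : 0 <= D by rewrite sumr_ge0 // => t _; rewrite sqr_ge0.
have P0 : 0 <= P by rewrite sumr_ge0.
have Sm0 : 0 <= Sm by rewrite sumr_ge0.
have [g [g0 Hg]] : exists g, 0 < g /\ forall c, c \notin tight_set C mu ->
    \sum_(t < T | t \in C c) mu t ^+ 2 <= 1 - g.
  case: (pickP (fun c => c \notin tight_set C mu)) => [c0 hc0|none]; last first.
    by exists 1; split => // c; rewrite none.
  have [c1 [hc1 Hc1]] :=
    ex_argmin (P := fun c => c \notin tight_set C mu) (fun c => 1 - \sum_(t < T | t \in C c) mu t ^+ 2) hc0.
  exists (1 - \sum_(t < T | t \in C c1) mu t ^+ 2); split; last first.
    by move=> c hc; have := Hc1 c hc; lra.
  rewrite subr_gt0 lt_neqAle feas andbT.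
  by move: hc1; rewrite inE.
have key : forall x X Y : R, 0 < X -> x <= Y / X -> x * X <= Y.
  by move=> x X Y hX; rewrite ler_pdivlMr.
have hD1 : 0 < D + 1 by lra.
have hP1 : 0 < 2 * P + D + 1 by lra.
have hS1 : 0 < D * Sm + 1 by have := mulr_ge0 D0 Sm0; lra.
have [e [e0 [e1 [e2 e3]]]] : exists e, 0 < e /\ e * (D + 1) <= 1 /\
    e * (2 * P + D + 1) <= g /\ e * (D * Sm + 1) <= \sum_t d t.
  exists (Num.min (1 / (D + 1)) (Num.min (g / (2 * P + D + 1)) ((\sum_t d t) / (D * Sm + 1)))).
  have ha : 0 < 1 / (D + 1) by exact: divr_gt0 ltr01 hD1.
  have hb : 0 < g / (2 * P + D + 1) by exact: divr_gt0 g0 hP1.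
  have hc : 0 < (\sum_t d t) / (D * Sm + 1).
    exact: divr_gt0 dpos hS1.
  split; first by rewrite !lt_min ha hb hc.
  split; first by apply: key => //; rewrite !ge_min lexx.
  split; first by apply: key => //; rewrite !ge_min lexx ?orbT.
  by apply: key => //; rewrite !ge_min lexx ?orbT.
pose dl := e ^+ 2 * D.
have eD : e * D <= 1 by have := mulr_ge0 (ltW e0) D0; nra.
have el : e <= 1 by have := mulr_ge0 (ltW e0) D0; nra.
have dl0 : 0 <= dl by rewrite /dl mulr_ge0 // sqr_ge0.
have dle : dl <= e.
  have -> : dl = e * (e * D) by rewrite /dl; ring.
  exact: ler_piMr (ltW e0) eD.
have dl1 : dl <= 1 by lra.
pose nu := fun t => `|(1 - dl) * mu t + e * d t|.
have feas' : dual_feasible C nu.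
  split => [c|t]; last exact: normr_ge0.
  have -> : \sum_(t < T | t \in C c) nu t ^+ 2 =
      \sum_(t < T | t \in C c) ((1 - dl) * mu t + e * d t) ^+ 2.
    by apply: eq_bigr => t _; rewrite /nu real_normK // num_real.
  rewrite expand.
  have Dc : \sum_(t < T | t \in C c) d t ^+ 2 <= D.
    by apply: sub_sum_le => t; rewrite sqr_ge0.
  have Dc0 : 0 <= \sum_(t < T | t \in C c) d t ^+ 2.
    by apply: sumr_ge0 => t _; rewrite sqr_ge0.
  have sc0 : 0 <= \sum_(t < T | t \in C c) mu t ^+ 2.
    by apply: sumr_ge0 => t _; rewrite sqr_ge0.
  have Pc : `|\sum_(t < T | t \in C c) mu t * d t| <= P.
    by apply: le_trans (ler_norm_sum _ _ _) _; apply: sub_sum_le => t; exact: normr_ge0.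
  move: Pc Dc Dc0 sc0.
  set p := \sum_(t < T | t \in C c) mu t * d t.
  set Dc := \sum_(t < T | t \in C c) d t ^+ 2.
  set sc := \sum_(t < T | t \in C c) mu t ^+ 2.
  move=> Pc Dc1 Dc0 sc0.
  have h3 : e ^+ 2 * Dc <= dl by rewrite /dl ler_wpM2l // sqr_ge0.
  have h1 : 0 <= (1 - dl) * e by rewrite mulr_ge0 ?subr_ge0 // ltW.
  case: (boolP (c \in tight_set C mu)) => hc.
    have sc1 : sc = 1 by move: hc; rewrite inE => /eqP.
    have hp : p <= 0 := Hd c hc.
    have h2 : (1 - dl) * e * p <= 0 by rewrite mulr_ge0_le0.
    rewrite sc1 mulr1.
    have -> : 2 * (1 - dl) * e * p = 2 * ((1 - dl) * e * p) by ring.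
    nra.
  have sg := Hg c hc; rewrite -/sc in sg.
  have q0 : 0 <= dl * (2 - dl) by rewrite mulr_ge0 //; lra.
  have hA : (1 - dl) ^+ 2 * sc <= sc.
    have -> : (1 - dl) ^+ 2 * sc = sc - dl * (2 - dl) * sc by ring.
    by rewrite lerBlDr lerDl mulr_ge0.
  move: Pc; rewrite ler_norml => /andP [pl pu].
  have hB : (1 - dl) * p <= P.
    have -> : (1 - dl) * p = P - ((1 - dl) * (P - p) + dl * P) by ring.
    by rewrite lerBlDr lerDl addr_ge0 // mulr_ge0 // subr_ge0.
  have hB' : e * ((1 - dl) * p) <= e * P by rewrite ler_wpM2l // ltW.
  have hC : e ^+ 2 * Dc <= e * D.
    apply: le_trans h3 _; rewrite /dl.
    have -> : e ^+ 2 * D = e * (e * D) by ring.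
    by apply: ler_wpM2l; [exact: ltW e0 | exact: ler_piMl D0 el].
  have -> : 2 * (1 - dl) * e * p = 2 * (e * ((1 - dl) * p)) by ring.
  have e2' : 2 * (e * P) + e * D + e <= g.
    by have -> : 2 * (e * P) + e * D + e = e * (2 * P + D + 1) by ring.
  lra.
have hobj : Sm < \sum_t nu t.
  apply: lt_le_trans (ler_sum _ (fun t _ => ler_norm _)).
  rewrite big_split /= -!mulr_sumr -/Sm.
  have e3' : e * (D * Sm) + e <= \sum_t d t.
    by have -> : e * (D * Sm) + e = e * (D * Sm + 1) by ring.
  have h4 : e * (e * (D * Sm)) < e * \sum_t d t.
    by rewrite ltr_pM2l //; lra.
  have -> : (1 - dl) * Sm = Sm - e * (e * (D * Sm)) by rewrite /dl; ring.
  lra.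
have := opt nu feas'; rewrite /dual_objective -/Sm => h.
by have := lt_le_trans hobj h; rewrite ltxx.
Qed.
End P.
Lemma cs_le (R : realType) T (P : pred 'I_T) (f g : 'I_T -> R) :
  \sum_(t | P t) g t ^+ 2 <= 1 ->
  \sum_(t | P t) f t * g t <= Num.sqrt (\sum_(t | P t) f t ^+ 2).
Proof.
move=> hg.
set L := Num.sqrt _.
have F0 : 0 <= \sum_(t | P t) f t ^+ 2 by apply: sumr_ge0 => t _; rewrite sqr_ge0.
have LL : L ^+ 2 = \sum_(t | P t) f t ^+ 2 by rewrite sqr_sqrtr.
have L0 : 0 <= L by rewrite sqrtr_ge0.
case: (eqVneq L 0) => hL.
  have hf : forall t, P t -> f t = 0.
    move=> t Pt; have := LL; rewrite hL expr0n /= => /esym/psumr_eq0P => h.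
    by apply/eqP; rewrite -sqrf_eq0; apply/eqP; apply: h => // i _; rewrite sqr_ge0.
  by rewrite big1 ?hL // => t Pt; rewrite hf // mul0r.
have Lp : 0 < L by rewrite lt_neqAle eq_sym hL L0.
have key : 2 * L * \sum_(t | P t) f t * g t <= 2 * L * L.
  have h1 : 2 * L * \sum_(t | P t) f t * g t <=
            \sum_(t | P t) f t ^+ 2 + L ^+ 2 * \sum_(t | P t) g t ^+ 2.
    rewrite !mulr_sumr -big_split /=; apply: ler_sum => t _.
    have : 0 <= (f t - L * g t) ^+ 2 by rewrite sqr_ge0.
    lra.
  apply: le_trans h1 _; rewrite -LL.
  have : L ^+ 2 * \sum_(t | P t) g t ^+ 2 <= L ^+ 2 by rewrite ler_piMr // sqr_ge0.
  move=> h; have -> : 2 * L * L = L ^+ 2 + L ^+ 2 by ring.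
  lra.
by move: key; rewrite ler_pM2l // mulr_gt0 // ltr0n.
Qed.

Theorem lemma4 (R : realType) (T N : nat) (S : 'I_T -> {set 'I_T})
    (C : 'I_N -> seq 'I_T) (mu : 'I_T -> R) :
  temporal_feedback_graph S ->
  enumerates_maximal_orders S C ->
  dual_optimal C mu ->
  exists B : {set 'I_N},
    [/\ B \subset tight_set C mu, (#|B| <= T)%N &
      exists lam : 'I_N -> 'I_T -> R,
        ub_optimal C lam /\ (forall c, c \notin B -> forall t, lam c t = 0)].
Proof.
move=> _ _ hopt.
have [[feas mu0] opt] := hopt.
pose a := fun c t => if (c \in tight_set C mu) && (t \in C c) then mu t else 0.
have restr : forall c (x : 'I_T -> R), c \in tight_set C mu ->
    \sum_t a c t * x t = \sum_(t | t \in C c) mu t * x t.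
  move=> c x hc; rewrite [RHS]big_mkcond /=; apply: eq_bigr => t _.
  by rewrite /a hc /=; case: ifP => _; rewrite ?mul0r.
have hF : forall x, (forall c, dot (a c) x <= 0) -> dot (fun _ => 1) x <= 0.
  move=> x hx; rewrite /dot; under eq_bigr do rewrite mul1r.
  apply: (perturb hopt) => c hc.
  by have := hx c; rewrite /dot restr.
have [l [l0 hl]] := farkas hF.
have [l' [l'0 hl' card]] := carath l0 hl.
pose B := [set c | (c \in tight_set C mu) && (l' c != 0)].
exists B; split.
- by apply/subsetP => c; rewrite inE => /andP [].
- apply: leq_trans card; apply: subset_leq_card; apply/subsetP => c.
  by rewrite !inE => /andP [].
pose lam := fun c t => l' c * a c t.
exists lam; split; last first.
  move=> c; rewrite inE negb_and => /orP [h|h] t; rewrite /lam /a.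
    by rewrite (negbTE h) mulr0.
  by rewrite negbK in h; rewrite (eqP h) mul0r.
have lfeas : ub_feasible C lam.
  split; [move=> t | split; [move=> c t ht | move=> c t]].
  - by rewrite [RHS](hl' t).
  - by rewrite /lam /a (negbTE ht) andbF mulr0.
  - by rewrite /lam /a mulr_ge0 //; case: ifP.
split => // lam2 feas2.
have ident : forall lm, ub_feasible C lm ->
    \sum_c \sum_t lm c t * mu t = \sum_t mu t.
  move=> lm [h1 _]; rewrite exchange_big /=; apply: eq_bigr => t _.
  by rewrite -mulr_suml h1 mul1r.
have onC : forall lm, ub_feasible C lm -> forall c,
    \sum_t lm c t * mu t = \sum_(t | t \in C c) lm c t * mu t.
  move=> lm [_ [h2 _]] c.
  rewrite [LHS](bigID (fun t => t \in C c)) /= [X in _ + X]big1 ?addr0 //.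
  by move=> t /h2 ->; rewrite mul0r.
have lower : ub_objective C lam2 >= \sum_c \sum_t lam2 c t * mu t.
  rewrite /ub_objective; apply: ler_sum => c _; rewrite (onC _ feas2).
  exact: cs_le.
suff -> : ub_objective C lam = \sum_c \sum_t lam c t * mu t.
  by rewrite (ident _ lfeas) -(ident _ feas2).
rewrite /ub_objective; apply: eq_bigr => c _; rewrite (onC _ lfeas).
case: (boolP (c \in tight_set C mu)) => hc.
  have sc1 : \sum_(t < T | t \in C c) mu t ^+ 2 = 1 by move: hc; rewrite inE => /eqP.
  have -> : \sum_(t < T | t \in C c) lam c t ^+ 2 = l' c ^+ 2.
    rewrite -[RHS]mulr1 -sc1 mulr_sumr; apply: eq_bigr => t ht.
    by rewrite /lam /a hc ht /= exprMn.
  rewrite sqrtr_sqr ger0_norm // -[LHS]mulr1 -sc1 mulr_sumr.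
  by apply: eq_bigr => t ht; rewrite /lam /a hc ht /= -mulrA expr2.
rewrite !big1 ?sqrtr0 // => t _; rewrite /lam /a (negbTE hc) /= mulr0 ?mul0r //.
by rewrite expr0n.
Qed.
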